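(* Let $U$ be a nonempty finite set, $R\subseteq U\times U$ serial and transitive, and $cl$ the closure operator of $M(Reg(U,R))$. Let $n$ be an integer with $1\le n\le h(U)$, and let $X,Y\in Reg(U,R)$ with $h(X)=n$ and $h(Y)=n-1$. Then for every $Z\subseteq U$ with $Y\subsetneq Z\subsetneq X$, $cl(Z)=X$.
   Context: $R_s(x)=\{y\in U\mid xRy\}$; $\underline{R}(X)=\{x\mid R_s(x)\subseteq X\}$, $\overline{R}(X)=\{x\mid R_s(x)\cap X\neq\emptyset\}$; $X$ is regular if $X=\underline{R}(\overline{R}(X))$, and $Reg(U,R)$ is the lattice of regular sets under inclusion, with least element $\emptyset$. $h(A)$ is the length of a maximal chain in $[\emptyset,A]$. $M(Reg(U,R))$ is the matroid on $U$ with independent sets $\{X\subseteq U\mid h(Y)\ge|X\cap Y|\ \forall Y\in Reg(U,R)\}$, rank function $r(X)=\max\{|I|\mid I\subseteq X \text{ independent}\}$, and closure operator $cl(X)=\{u\in U\mid r(X\cup\{u\})=r(X)\}$. *)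

(* Defs.v *)
From mathcomp Require Import all_boot.
Set Implicit Arguments. Unset Strict Implicit. Unset Printing Implicit Defensive.

Section RoughSets.
Variables (T : finType) (R : rel T).

Definition Rs (x : T) : {set T} := [set y | R x y].
Definition lowerR (X : {set T}) : {set T} := [set x | Rs x \subset X].
Definition upperR (X : {set T}) : {set T} := [set x | Rs x :&: X != set0].
Definition regular (X : {set T}) : bool := X == lowerR (upperR X).

Definition chainIn (A : {set T}) (C : {set {set T}}) : bool :=
  [forall B in C, regular B && (B \subset A)] &&
  [forall B in C, forall D in C, (B \subset D) || (D \subset B)].

(* h(A): length (= number of elements - 1) of a longest (in particular,
   of a maximal) chain in the interval [set0, A] of Reg(U,R). *)
Definition h (A : {set T}) : nat :=
  (\max_(C : {set {set T}} | chainIn A C) #|C|).-1.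

Definition indep (X : {set T}) : bool :=
  [forall Y : {set T}, regular Y ==> (#|X :&: Y| <= h Y)].

Definition rank (X : {set T}) : nat :=
  \max_(I : {set T} | (I \subset X) && indep I) #|I|.

Definition cl (X : {set T}) : {set T} := [set u | rank (u |: X) == rank X].

End RoughSets.

(* Main.v *)
Require Import Defs.
From mathcomp Require Import all_boot zify.
Set Implicit Arguments. Unset Strict Implicit. Unset Printing Implicit Defensive.

Definition terminal (T : finType) (R : rel T) t := [forall y, R t y ==> R y t].
Definition rep (T : finType) (R : rel T) (t : T) := odflt t [pick y | R t y].
Definition Reps (T : finType) (R : rel T) := [set t | terminal R t && (rep R t == t)].
Definition Gen (T : finType) (R : rel T) (A : {set T}) :=
  [set x | [forall t, (terminal R t && R x t) ==> (rep R t \in A)]].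

Lemma termP (T : finType) (R : rel T) t : reflect (forall y, R t y -> R y t) (terminal R t).
Proof. by apply: (iffP forallP) => H y; [apply/implyP/H | apply/implyP/H]. Qed.

Section S.
Context (T : finType) (R : rel T) (hs : forall x : T, exists y, R x y) (ht : transitive R).

Lemma term_refl t : terminal R t -> R t t.
Proof. move/termP=> H; have [y Hy] := hs t; exact: ht (H _ Hy). Qed.

Lemma term_rep t : terminal R t -> R t (rep R t).
Proof.
move=> Ht; rewrite /rep; case: pickP => [y //|/(_ t)]; by rewrite term_refl.
Qed.

Lemma rep_term t : terminal R t -> terminal R (rep R t).
Proof.
move=> Ht; have Htr := term_rep Ht; move/termP: Ht => Ht.
apply/termP=> y Hy; have Hty : R t y := ht Htr Hy.
exact: ht (Ht _ Hty) Htr.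
Qed.

Lemma rep_eq t t' : terminal R t -> R t t' -> rep R t' = rep R t.
Proof.
move=> Ht Htt'; have Hst : R t' t by move/termP: Ht; apply.
have E : (fun y => R t' y) =1 (fun y => R t y).
  move=> y; apply/idP/idP => H; [exact: ht Htt' H | exact: ht Hst H].
rewrite /rep (eq_pick E); case: pickP => [//|/(_ t)]; by rewrite term_refl.
Qed.

Lemma rep_Reps t : terminal R t -> rep R t \in Reps R.
Proof.
move=> Ht; rewrite inE (rep_term Ht) /=; apply/eqP; exact: (rep_eq Ht (term_rep Ht)).
Qed.

Lemma rep_back t : terminal R t -> R (rep R t) t.
Proof. by move=> Ht; exact: (elimT (termP R t) Ht _ (term_rep Ht)). Qed.

Lemma exists_term y : exists t, terminal R t && R y t.
Proof.
have [s0 Hs0] := hs y.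
case: (@arg_minnP _ s0 (fun s => R y s) (fun s => #|[set w | R s w]|) Hs0) => t0 Ht0 Hmin.
have [s Hs] := hs t0.
exists s; rewrite (ht Ht0 Hs) andbT; apply/termP => v Hv.
have Hyv : R y v by apply: ht Ht0 (ht Hs Hv).
have Hsub : [set w | R v w] \subset [set w | R t0 w].
  apply/subsetP => w; rewrite !inE => Hw; exact: ht Hs (ht Hv Hw).
have Heq : [set w | R v w] = [set w | R t0 w].
  by apply/eqP; rewrite eqEcard Hsub /= Hmin.
have : s \in [set w | R t0 w] by rewrite inE.
by rewrite -Heq inE.
Qed.

Lemma LU_P (W : {set T}) x : reflect (forall y, R x y -> exists2 w, w \in W & R y w)
  (x \in lowerR R (upperR R W)).
Proof.
rewrite inE; apply: (iffP subsetP) => H y.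
- move=> Hy; have := H y; rewrite !inE => /(_ Hy) /set0Pn [w]; rewrite !inE => /andP[a b].
  by exists w.
- rewrite inE => Hy; have [w Hw Hyw] := H y Hy; rewrite inE; apply/set0Pn; exists w.
  by rewrite !inE Hyw Hw.
Qed.

Lemma reg_in (W : {set T}) x t : regular R W -> x \in W -> R x t -> terminal R t -> t \in W.
Proof.
move=> /eqP HW; rewrite HW => /LU_P Hx Hxt Ht; have [w Hw Htw] := Hx t Hxt.
apply/LU_P => y Hty; exists w => //; exact: ht (elimT (termP R t) Ht _ Hty) Htw.
Qed.

Lemma reg_out (W : {set T}) x : regular R W -> (forall t, terminal R t -> R x t -> t \in W) -> x \in W.
Proof.
move=> /eqP HW H; rewrite HW; apply/LU_P => y Hxy.
have [t /andP[Ht Hyt]] := exists_term y; exists t => //; exact: H t Ht (ht Hxy Hyt).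
Qed.

Lemma reg_of (W : {set T}) : (forall x, x \in W -> forall t, terminal R t -> R x t -> t \in W) ->
  (forall x, (forall t, terminal R t -> R x t -> t \in W) -> x \in W) -> regular R W.
Proof.
move=> H1 H2; apply/eqP/setP => x; apply/idP/LU_P.
- move=> Hx y Hxy; have [t /andP[Ht Hyt]] := exists_term y; exists t => //.
  exact: H1 Hx t Ht (ht Hxy Hyt).
- move=> H; apply: H2 => t Ht Hxt; have [w Hw Htw] := H t Hxt.
  exact: (H1 w Hw t Ht (elimT (termP R t) Ht _ Htw)).
Qed.

Lemma GenP (A : {set T}) x : reflect (forall t, terminal R t -> R x t -> rep R t \in A) (x \in Gen R A).
Proof.
rewrite inE; apply: (iffP forallP) => H t.
- move=> Ht Hxt; exact: implyP (H t) (introT andP (conj Ht Hxt)).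
- apply/implyP => /andP[Ht Hxt]; exact: H.
Qed.

Lemma Gen_reg (A : {set T}) : regular R (Gen R A).
Proof.
apply: reg_of.
- move=> x /GenP Hx t Ht Hxt; apply/GenP => t' Ht' Htt'; exact: Hx t' Ht' (ht Hxt Htt').
- move=> x H; apply/GenP => t Ht Hxt; have /GenP := H t Ht Hxt; apply => //; exact: term_refl.
Qed.

Lemma Gen_Reps (A : {set T}) : A \subset Reps R -> Gen R A :&: Reps R = A.
Proof.
move=> HA; apply/setP => r; rewrite inE; apply/andP/idP.
- case=> /GenP Hr; rewrite inE => /andP[Hrt /eqP Hrr]; rewrite -Hrr; exact: Hr r Hrt (term_refl Hrt).
- move=> Hr; have := subsetP HA r Hr; rewrite inE => /andP[Hrt /eqP Hrr]; split; last by rewrite Hrt Hrr eqxx.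
  apply/GenP => t Ht Hrt'; by rewrite (rep_eq Hrt Hrt') Hrr.
Qed.

Lemma Gen_mono (A A' : {set T}) : A \subset A' -> Gen R A \subset Gen R A'.
Proof.
move=> HA; apply/subsetP => x /GenP H; apply/GenP => t Ht Hxt; exact: subsetP HA _ (H t Ht Hxt).
Qed.

Lemma Gen_reg_eq (W : {set T}) : regular R W -> Gen R (W :&: Reps R) = W.
Proof.
move=> HW; apply/setP => x; apply/GenP/idP.
- move=> H; apply: (reg_out HW) => t Ht Hxt; have := H t Ht Hxt; rewrite inE => /andP[Hw _].
  exact: reg_in HW Hw (rep_back Ht) Ht.
- move=> Hx t Ht Hxt; rewrite inE (rep_Reps Ht) andbT; apply: (reg_in HW Hx _ (rep_term Ht)).
  exact: ht Hxt (term_rep Ht).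
Qed.
End S.

Section S2.
Context (T : finType) (R : rel T) (hs : forall x : T, exists y, R x y) (ht : transitive R).

Lemma reg_eq_card (B D : {set T}) : regular R B -> regular R D -> B \subset D ->
  #|B :&: Reps R| = #|D :&: Reps R| -> B = D.
Proof.
move=> HB HD HBD Hc.
have E : B :&: Reps R = D :&: Reps R by apply/eqP; rewrite eqEcard setSI //= Hc.
by rewrite -(Gen_reg_eq hs ht HB) -(Gen_reg_eq hs ht HD) E.
Qed.

Lemma h_ub (W : {set T}) : regular R W -> h R W <= #|W :&: Reps R|.
Proof.
move=> HW; rewrite /h.
suff H : \max_(C | chainIn R W C) #|C| <= #|W :&: Reps R|.+1.
  move: H; set M := \max_(C | _) _; move=> H; rewrite -subn1; lia.
apply/bigmax_leqP => C /andP[/forallP HC /forallP Hch].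
set m := #|W :&: Reps R|.
have Hle : forall B, B \in C -> #|B :&: Reps R| < m.+1.
  move=> B HB; move/implyP: (HC B) => /(_ HB) /andP[_ HBW].
  by rewrite ltnS subset_leq_card // setSI.
pose g := fun B : {set T} => (inord #|B :&: Reps R| : 'I_m.+1).
have Hinj : {in C &, injective g}.
  move=> B D HB HD /(congr1 val); rewrite /g /= !inordK ?Hle // => Hc.
  move/implyP: (HC B) => /(_ HB) /andP[RB _].
  move/implyP: (HC D) => /(_ HD) /andP[RD _].
  move/implyP: (Hch B) => /(_ HB) /forallP /(_ D) /implyP /(_ HD) /orP [BD|DB].
  - exact: reg_eq_card RB RD BD Hc.
  - by symmetry; apply: reg_eq_card RD RB DB _.
rewrite -(card_in_imset Hinj); apply: leq_trans (max_card _) _; by rewrite card_ord.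
Qed.

Lemma chain_exists m : forall A : {set T}, A \subset Reps R -> #|A| = m ->
  exists C, chainIn R (Gen R A) C && (#|C| == m.+1).
Proof.
elim: m => [|m IH] A HA Hc.
  exists [set Gen R A]; rewrite cards1 eqxx andbT /chainIn; apply/andP; split.
    by apply/forallP => B; apply/implyP; rewrite inE => /eqP ->; rewrite Gen_reg // subxx.
  apply/forallP => B; apply/implyP; rewrite inE => /eqP ->.
  by apply/forallP => D; apply/implyP; rewrite inE => /eqP ->; rewrite subxx.
have [a Ha] : exists a, a \in A by apply/set0Pn; rewrite -card_gt0 Hc.
have HA' : A :\ a \subset Reps R by apply: subset_trans HA; exact: subsetDl.
have Hc' : #|A :\ a| = m by move: Hc; rewrite (cardsD1 a A) Ha; case.
have [C' /andP[/andP[/forallP HC /forallP Hch] /eqP HC']] := IH _ HA' Hc'.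
have Hsub : Gen R (A :\ a) \subset Gen R A by apply: Gen_mono; exact: subsetDl.
have HCsub : forall B, B \in C' -> regular R B && (B \subset Gen R A).
  move=> B HB; move/implyP: (HC B) => /(_ HB) /andP[-> HBs] /=; exact: subset_trans HBs Hsub.
have Hnot : Gen R A \notin C'.
  apply/negP => Hin; move/implyP: (HC (Gen R A)) => /(_ Hin) /andP[_ Hs].
  have := setSI (Reps R) Hs; rewrite !Gen_Reps // => /subsetP /(_ a Ha).
  by rewrite setD11.
exists (Gen R A |: C'); rewrite cardsU1 Hnot HC' eqxx andbT; apply/andP; split.
  apply/forallP => B; apply/implyP; rewrite in_setU1 => /orP [/eqP ->|HB].
    by rewrite Gen_reg // subxx.
  exact: HCsub.
apply/forallP => B; apply/implyP; rewrite in_setU1 => /orP [/eqP ->|HB];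
  apply/forallP => D; apply/implyP; rewrite in_setU1 => /orP [/eqP ->|HD].
- by rewrite subxx.
- by have /andP[_ ->] := HCsub D HD; rewrite orbT.
- by have /andP[_ ->] := HCsub B HB.
- by move/implyP: (Hch B) => /(_ HB) /forallP /(_ D) /implyP /(_ HD).
Qed.

Lemma h_lb (W : {set T}) : regular R W -> #|W :&: Reps R| <= h R W.
Proof.
move=> HW.
have [C /andP[HC /eqP Hc]] := chain_exists (subsetIr W (Reps R)) (erefl _).
rewrite (Gen_reg_eq hs ht HW) in HC.
rewrite /h; have := @leq_bigmax_cond _ (fun C => chainIn R W C) (fun C : {set {set T}} => #|C|) _ HC.
set M := \max_(C | _) _.
rewrite Hc -subn1; lia.
Qed.

Lemma h_eq (W : {set T}) : regular R W -> h R W = #|W :&: Reps R|.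
Proof. by move=> HW; apply/eqP; rewrite eqn_leq h_ub // h_lb. Qed.
End S2.

Section S3.
Context (T : finType) (R : rel T) (hs : forall x : T, exists y, R x y) (ht : transitive R).

Definition strongf (f : T -> T) (J : {set T}) := {in J &, injective f} /\
  forall x, x \in J -> f x \in Reps R /\ forall W, regular R W -> x \in W -> f x \in W.

Lemma strong_indep f J : strongf f J -> indep R J.
Proof.
move=> [Hinj Hf]; apply/forallP => W; apply/implyP => HW; rewrite (h_eq hs ht HW).
have Hinj' : {in J :&: W &, injective f}.
  by move=> x y /setIP[Hx _] /setIP[Hy _]; exact: Hinj.
rewrite -(card_in_imset Hinj'); apply: subset_leq_card; apply/subsetP => y.
move=> /imsetP [x /setIP[HxJ HxW] ->]; have [H1 H2] := Hf x HxJ.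
by rewrite inE H1 (H2 W HW HxW).
Qed.

Lemma strong_base (Y : {set T}) : strongf id (Y :&: Reps R).
Proof.
split; first by move=> x y _ _.
by move=> x /setIP[_ Hr]; split.
Qed.

Lemma strong_ext f J x a : strongf f J -> x \notin J -> a \in Reps R ->
  (forall W, regular R W -> x \in W -> a \in W) -> (forall y, y \in J -> f y != a) ->
  strongf (fun y => if y == x then a else f y) (x |: J).
Proof.
move=> [Hinj Hf] Hx Ha HaW Hfa.
have Hne : forall y, y \in J -> (y == x) = false.
  by move=> y Hy; apply/eqP => E; rewrite -E Hy in Hx.
split.
- move=> y1 y2; rewrite !in_setU1 => /orP[/eqP->|H1] /orP[/eqP->|H2]; rewrite ?eqxx //.
  + rewrite (Hne _ H2) => E; by move: (Hfa _ H2); rewrite E eqxx.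
  + rewrite (Hne _ H1) => E; by move: (Hfa _ H1); rewrite E eqxx.
  + rewrite (Hne _ H1) (Hne _ H2); exact: Hinj.
- move=> y; rewrite in_setU1 => /orP[/eqP->|Hy].
  + by rewrite eqxx; split.
  + rewrite (Hne _ Hy); exact: Hf y Hy.
Qed.

Lemma rank_ge (J V : {set T}) : J \subset V -> indep R J -> #|J| <= rank R V.
Proof.
move=> HJ HI; rewrite /rank.
by apply: (leq_bigmax_cond (F := fun I : {set T} => #|I|)); rewrite HJ HI.
Qed.

Lemma rank_le (X V : {set T}) : regular R X -> V \subset X -> rank R V <= h R X.
Proof.
move=> hX HV; apply/bigmax_leqP => I /andP[HIV HI].
move/forallP: HI => /(_ X) /implyP /(_ hX).
by rewrite (setIidPl (subset_trans HIV HV)).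
Qed.

Lemma bad_term (Y : {set T}) z : regular R Y -> z \notin Y ->
  exists2 t, terminal R t && R z t & t \notin Y.
Proof.
move=> hY HzY.
case: (boolP [exists t, (terminal R t && R z t) && (t \notin Y)]) => [/existsP [t /andP[H1 H2]]| /existsPn H].
  by exists t.
exfalso; apply: (negP HzY); apply: (reg_out hs ht hY) => t Ht Hzt.
by move: (H t); rewrite Ht Hzt /= negbK.
Qed.
End S3.

Theorem proposition9 (T : finType) (R : rel T)
  (hne : 0 < #|T|)
  (hserial : forall x : T, exists y : T, R x y)
  (htrans : transitive R)
  (n : nat) (hn1 : 1 <= n) (hn2 : n <= h R [set: T])
  (X Y : {set T}) (hX : regular R X) (hY : regular R Y)
  (hXn : h R X = n) (hYn : h R Y = n - 1) :
  forall Z : {set T}, Y \proper Z -> Z \proper X -> cl R Z = X.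
Proof.
move=> Z /properP [HYZ [z HzZ HzY]] /properP [HZX _].
have HzX : z \in X := subsetP HZX z HzZ.
have HYX : Y \subset X := subset_trans HYZ HZX.
have HcY : #|Y :&: Reps R| = n - 1 by rewrite -(h_eq hserial htrans hY).
have [t /andP[Ht Hzt] HtY] := bad_term hserial htrans hY HzY.
set a := rep R t.
have Ha : a \in Reps R := rep_Reps hserial htrans Ht.
have HaY : a \notin Y.
  apply/negP => HaY; apply: (negP HtY).
  exact: (reg_in htrans hY HaY (rep_back hserial htrans Ht) Ht).
have HaW : forall W, regular R W -> z \in W -> a \in W.
  move=> W HW Hz; apply: (reg_in htrans HW Hz _ (rep_term hserial htrans Ht)).
  exact: htrans Hzt (term_rep hserial htrans Ht).
have HaX : a \in X := HaW X hX HzX.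
have HzJ : z \notin Y :&: Reps R by rewrite inE (negbTE HzY).
have Hna : forall y, y \in Y :&: Reps R -> id y != a.
  by move=> y /setIP[Hy _]; apply/eqP => E; rewrite /= E in Hy; rewrite Hy in HaY.
have S1 := strong_ext (strong_base R Y) HzJ Ha HaW Hna.
set J1 := z |: (Y :&: Reps R).
have HJ1 : #|J1| = n by rewrite cardsU1 HzJ HcY add1n subn1 prednK.
have HJ1Z : J1 \subset Z.
  by rewrite subUset sub1set HzZ (subset_trans (subsetIl _ _) HYZ).
have rZ : rank R Z = n.
  apply/eqP; rewrite eqn_leq; rewrite -{1}hXn (rank_le hX HZX) /=.
  by rewrite -{1}HJ1 (rank_ge HJ1Z (strong_indep hserial htrans S1)).
apply/setP => u; rewrite inE rZ.
case: (boolP (u \in X)) => HuX.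
  apply/eqP/eqP; rewrite eqn_leq; rewrite -{1}hXn (rank_le hX _) /=; last first.
    by rewrite subUset sub1set HuX HZX.
  rewrite -{1}HJ1 (rank_ge _ (strong_indep hserial htrans S1)) //.
  exact: subset_trans HJ1Z (subsetUr _ _).
have [s /andP[Hs Hus] HsX] := bad_term hserial htrans hX HuX.
set b := rep R s.
have Hb : b \in Reps R := rep_Reps hserial htrans Hs.
have HbX : b \notin X.
  apply/negP => HbX; apply: (negP HsX).
  exact: (reg_in htrans hX HbX (rep_back hserial htrans Hs) Hs).
have HbW : forall W, regular R W -> u \in W -> b \in W.
  move=> W HW Hu; apply: (reg_in htrans HW Hu _ (rep_term hserial htrans Hs)).
  exact: htrans Hus (term_rep hserial htrans Hs).
have HuJ : u \notin J1.
  rewrite in_setU1 negb_or; apply/andP; split.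
    by apply/eqP => E; rewrite E HzX in HuX.
  by rewrite inE negb_and; apply/orP; left; apply/negP => HuY; rewrite (subsetP HYX u HuY) in HuX.
have Hfb : forall y, y \in J1 -> (if y == z then a else y) != b.
  move=> y Hy; apply/eqP => E.
  have : (if y == z then a else y) \in X.
    case: ifP => // _; move: Hy; rewrite in_setU1 => /orP[/eqP->//|/setIP[HyY _]].
    exact: subsetP HYX y HyY.
  by rewrite E (negbTE HbX).
have S2 := strong_ext S1 HuJ Hb HbW Hfb.
have HJ2 : #|u |: J1| = n.+1 by rewrite cardsU1 HuJ HJ1.
have := rank_ge (setUS [set u] HJ1Z) (strong_indep hserial htrans S2).
rewrite HJ2 => H; apply/negbTE/eqP => E; by rewrite E ltnn in H.
Qed.
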